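(* Let $(X,\rho)$ be a metric space and let $(A_k)\subset CL(X)$. Then for every unbounded modulus $f\colon[0,\infty)\to[0,\infty)$, the $f$-Wijsman statistical limit of $(A_k)$ is unique if it exists; i.e., if $(A_k)$ is $f$-Wijsman statistically convergent to $A\in CL(X)$ and to $B\in CL(X)$, then $A=B$.
   Context: A modulus is a function $f\colon[0,\infty)\to[0,\infty)$ such that $f(x)=0$ iff $x=0$, $f$ is subadditive, increasing and continuous. $CL(X)$ denotes the set of all non-empty closed subsets of $(X,\rho)$, and $d(x,B)=\inf_{y\in B}\rho(x,y)$. For an unbounded modulus $f$ and $K\subseteq\mathbb N$, the $f$-density is $d^f(K)=\lim_{n\to\infty}\frac{f(|\{k\le n:k\in K\}|)}{f(n)}$ (when the limit exists). A real sequence $(x_k)$ is $f$-statistically convergent to $l$ if for every $\varepsilon>0$ the set $\{k:|x_k-l|\ge\varepsilon\}$ has $f$-density $0$. $(A_k)\subset CL(X)$ is $f$-Wijsman statistically convergent to $A\in CL(X)$ if for every $x\in X$ the sequence $(d(x,A_k))$ is $f$-statistically convergent to $d(x,A)$. *)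

(* Defs.v *)
From Stdlib Require Import Reals Lra ClassicalDescription.
From Coquelicot Require Import Coquelicot.
Open Scope R_scope.

Definition is_metric {X : Type} (rho : X -> X -> R) : Prop :=
  (forall x y, 0 <= rho x y) /\
  (forall x y, rho x y = 0 <-> x = y) /\
  (forall x y, rho x y = rho y x) /\
  (forall x y z, rho x z <= rho x y + rho y z).

Definition metric_closed {X : Type} (rho : X -> X -> R) (A : X -> Prop) : Prop :=
  forall x, (forall eps, 0 < eps -> exists y, A y /\ rho x y < eps) -> A x.

Definition in_CL {X : Type} (rho : X -> X -> R) (A : X -> Prop) : Prop :=
  (exists a, A a) /\ metric_closed rho A.

Definition dist_set {X : Type} (rho : X -> X -> R) (x : X) (B : X -> Prop) : R :=
  real (Glb_Rbar (fun r => exists y, B y /\ r = rho x y)).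

(* modulus f : [0,oo) -> [0,oo) (given as a function R -> R; only values on [0,oo) matter) *)
Definition is_modulus (f : R -> R) : Prop :=
  (forall x, 0 <= x -> 0 <= f x) /\
  (forall x, 0 <= x -> (f x = 0 <-> x = 0)) /\
  (forall x y, 0 <= x -> 0 <= y -> f (x + y) <= f x + f y) /\
  (forall x y, 0 <= x -> x <= y -> f x <= f y) /\
  (forall x, 0 <= x ->
     filterlim f (within (fun y => 0 <= y) (locally x)) (locally (f x))).

Definition unbounded_modulus (f : R -> R) : Prop :=
  is_modulus f /\ forall M, exists x, 0 <= x /\ M < f x.

(* number of k < n with P k; sequences are indexed from 0, so the paper's
   index set {1,...,n} corresponds to {0,...,n-1}. *)
Fixpoint count_upto (P : nat -> Prop) (n : nat) : nat :=
  match n with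
  | O => O
  | S m => (count_upto P m + (if excluded_middle_informative (P m) then 1 else 0))%nat
  end.

Definition f_density_zero (f : R -> R) (K : nat -> Prop) : Prop :=
  is_lim_seq (fun n => f (INR (count_upto K n)) / f (INR n)) 0.

Definition f_stat_conv (f : R -> R) (x : nat -> R) (l : R) : Prop :=
  forall eps, 0 < eps -> f_density_zero f (fun k => Rabs (x k - l) >= eps).

Definition f_wijsman_stat_conv {X : Type} (rho : X -> X -> R) (f : R -> R)
  (A_ : nat -> X -> Prop) (A : X -> Prop) : Prop :=
  forall x, f_stat_conv f (fun k => dist_set rho x (A_ k)) (dist_set rho x A).

(* Main.v *)
Require Import Defs.
From Stdlib Require Import Reals Lra Lia FunctionalExtensionality PropExtensionality Classical_Prop ClassicalDescription.
From Coquelicot Require Import Coquelicot.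
Open Scope R_scope.

Lemma count_union (P Q : nat -> Prop) (n : nat) :
  (forall k, P k \/ Q k) -> (n <= count_upto P n + count_upto Q n)%nat.
Proof.
  intros H. induction n as [|n IH]; simpl; [lia|].
  destruct (excluded_middle_informative (P n));
  destruct (excluded_middle_informative (Q n)); try lia.
  destruct (H n); tauto.
Qed.

Lemma dist_fin {X : Type} (rho : X -> X -> R) (Hrho : is_metric rho) x (B : X -> Prop) :
  (exists b, B b) ->
  Glb_Rbar (fun r => exists y, B y /\ r = rho x y) = Finite (dist_set rho x B)
  /\ 0 <= dist_set rho x B.
Proof.
  intros [b Hb]. destruct Hrho as [Hpos _].
  unfold dist_set.
  destruct (Glb_Rbar_correct (fun r => exists y, B y /\ r = rho x y)) as [Hlb Hgl].
  assert (H0 : Rbar_le 0 (Glb_Rbar (fun r => exists y, B y /\ r = rho x y))).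
  { apply Hgl. intros r [y [_ ->]]. simpl. apply Hpos. }
  assert (H1 : Rbar_le (Glb_Rbar (fun r => exists y, B y /\ r = rho x y)) (rho x b)).
  { apply Hlb. exists b; auto. }
  destruct (Glb_Rbar (fun r => exists y, B y /\ r = rho x y)); simpl in *; try contradiction.
  split; auto.
Qed.

Lemma dist_mem {X : Type} (rho : X -> X -> R) (Hrho : is_metric rho) x (B : X -> Prop) :
  B x -> dist_set rho x B = 0.
Proof.
  intros Hx. destruct (dist_fin rho Hrho x B (ex_intro _ x Hx)) as [He Hp].
  destruct (Glb_Rbar_correct (fun r => exists y, B y /\ r = rho x y)) as [Hlb _].
  rewrite He in Hlb.
  assert (H := Hlb (rho x x) (ex_intro _ x (conj Hx eq_refl))). simpl in H.
  destruct Hrho as [_ [Hz _]]. assert (rho x x = 0) by (apply Hz; auto). lra.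
Qed.

Lemma dist_zero {X : Type} (rho : X -> X -> R) (Hrho : is_metric rho) x (B : X -> Prop) :
  in_CL rho B -> dist_set rho x B = 0 -> B x.
Proof.
  intros [Hne Hcl] H0. apply Hcl. intros eps Heps.
  destruct (dist_fin rho Hrho x B Hne) as [He Hp].
  destruct (Glb_Rbar_correct (fun r => exists y, B y /\ r = rho x y)) as [_ Hgl].
  rewrite He, H0 in Hgl.
  destruct (classic (exists y, B y /\ rho x y < eps)) as [H|H]; auto.
  exfalso.
  assert (Hl : Rbar_le eps 0).
  { apply Hgl. intros r [y [Hy ->]]. simpl.
    destruct (Rlt_or_le (rho x y) eps); auto. exfalso; apply H; eauto. }
  simpl in Hl. lra.
Qed.

Lemma fpos (f : R -> R) (Hf : is_modulus f) (n : nat) : (1 <= n)%nat -> 0 < f (INR n).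
Proof.
  intros Hn. destruct Hf as [H0 [Hz _]].
  assert (0 <= INR n) by apply pos_INR.
  destruct (H0 (INR n) H) as [Hlt|Heq]; auto.
  assert (E : INR n = 0) by (apply (proj1 (Hz (INR n) H)); auto).
  apply le_INR in Hn. change (INR 1) with 1 in Hn. lra.
Qed.

Lemma uniq_lim (f : R -> R) (Hf : is_modulus f) (d : nat -> R) (a b : R) :
  f_stat_conv f d a -> f_stat_conv f d b -> a = b.
Proof.
  intros Ha Hb.
  destruct (Req_dec a b) as [E|Hne]; auto. exfalso.
  set (eps := Rabs (a - b) / 2).
  assert (Hab : a - b <> 0) by (intro; apply Hne; lra).
  assert (Heps : 0 < eps) by (unfold eps; pose proof (Rabs_pos_lt _ Hab); lra).
  set (P := fun k => Rabs (d k - a) >= eps).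
  set (Q := fun k => Rabs (d k - b) >= eps).
  assert (HPQ : forall k, P k \/ Q k).
  { intro k. unfold P, Q.
    destruct (Rge_or_gt (Rabs (d k - a)) eps); auto.
    destruct (Rge_or_gt (Rabs (d k - b)) eps); auto.
    exfalso. assert (Rabs (a - b) <= Rabs (d k - a) + Rabs (d k - b)).
    { replace (a - b) with (-(d k - a) + (d k - b)) by ring.
      eapply Rle_trans; [apply Rabs_triang|]. rewrite Rabs_Ropp. lra. }
    unfold eps in *. lra. }
  assert (L := is_lim_seq_plus' _ _ _ _ (Ha eps Heps) (Hb eps Heps)).
  apply is_lim_seq_spec in L.
  destruct (L (mkposreal (1/2) ltac:(lra))) as [N HN].
  specialize (HN (S N) ltac:(lia)). change (pos (mkposreal (1/2) _)) with (1/2) in HN.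
  set (n := S N) in HN.
  assert (Hn : (1 <= n)%nat) by (unfold n; lia).
  pose proof (fpos f Hf n Hn) as Hfn.
  destruct Hf as [H0 [_ [Hsub [Hmon _]]]].
  set (c1 := count_upto P n) in HN. set (c2 := count_upto Q n) in HN.
  assert (Hc : (n <= c1 + c2)%nat) by (apply count_union; auto).
  assert (F : f (INR n) <= f (INR c1) + f (INR c2)).
  { eapply Rle_trans. apply Hmon. apply pos_INR. apply le_INR. exact Hc.
    rewrite plus_INR. apply Hsub; apply pos_INR. }
  assert (E : f (INR c1) / f (INR n) + f (INR c2) / f (INR n) >= 1).
  { unfold Rdiv. rewrite <- Rmult_plus_distr_r.
    apply Rle_ge. apply (Rmult_le_reg_r (f (INR n))); auto.
    rewrite Rmult_assoc, Rinv_l; lra. }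
  assert (HN' : Rabs (f (INR c1) / f (INR n) + f (INR c2) / f (INR n) - (0+0)) < 1/2) by exact HN.
  rewrite Rplus_0_r in HN'.
  rewrite Rminus_0_r in HN'.
  apply Rabs_def2 in HN'. lra.
Qed.

Theorem corollary2p4 (X : Type) (rho : X -> X -> R) (Hrho : is_metric rho)
  (A_ : nat -> X -> Prop) (HA_ : forall k, in_CL rho (A_ k))
  (f : R -> R) (Hf : unbounded_modulus f)
  (A B : X -> Prop) (HA : in_CL rho A) (HB : in_CL rho B) :
  f_wijsman_stat_conv rho f A_ A -> f_wijsman_stat_conv rho f A_ B -> A = B.
Proof.
  intros H1 H2.
  assert (D : forall x, dist_set rho x A = dist_set rho x B).
  { intro x. eapply uniq_lim; [apply Hf| apply H1 | apply H2]. }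
  apply functional_extensionality; intro x.
  apply propositional_extensionality; split; intro Hx.
  - apply (dist_zero rho Hrho); auto. rewrite <- D. apply dist_mem; auto.
  - apply (dist_zero rho Hrho); auto. rewrite D. apply dist_mem; auto.
Qed.
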